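(* Assume $\theta_i<1$ for all $i$ and $\theta_j>0$ for some $j$. Suppose $\mathcal G(C)$ is a star topology with center node $l$ and $0<\theta_l<1$. Then: (i) for every $i\in\mathcal V_p\setminus\{l\}$ with $C_{li}=0$ and every $x(0)\in\Delta_n$, the trajectory of system (A) satisfies that $x_i(s)$ converges exponentially to $\dfrac{n-\sqrt{n^2-4n\theta_i(1-\theta_i)}}{2n\theta_i}$; (ii) if moreover $C_{li}=0$ for all $i\in\mathcal V_p\setminus\{l\}$ and $\sum_{j\in\mathcal V_p\setminus\{l\}}\theta_j\le \dfrac{4n}{5}-1$, then for every $x(0)\in\Delta_n$ the trajectory of system (A) converges exponentially to the unique equilibrium $x^*$ given by $x^*_i=\dfrac{n-\sqrt{n^2-4n\theta_i(1-\theta_i)}}{2n\theta_i}$ for $i\in\mathcal V_p\setminus\{l\}$, $x^*_l=\dfrac{n-\sqrt{n^2-4n\theta_l(1-\theta_l)\xi^*}}{2n\theta_l}$, and $x^*_i=\dfrac1n+\big(\dfrac{\xi^*}{n}-x^*_l\big)C_{li}$ for $i\in\mathcal V_f$, where $\xi^*=n-r-n\sum_{j\in\mathcal V_p\setminus\{l\}}x^*_j$ and $r=|\mathcal V_f|$.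
   Context: Let $n\ge 2$, $\mathbf 1_n$ the all-ones vector, $I_n$ the identity matrix, $\Delta_n=\{x\in\mathbb R^n: x\ge 0,\ \mathbf 1_n^Tx=1\}$. Let $C\in\mathbb R^{n\times n}$ be a nonnegative row-stochastic matrix with zero diagonal, and $\mathcal G(C)$ the digraph on $\{1,\dots,n\}$ with an edge $(i,j)$ iff $C_{ij}>0$. $\mathcal G(C)$ is a star topology with center node $l$ if every edge of $\mathcal G(C)$ is either from $l$ or to $l$ (i.e. $C_{ij}>0$ implies $i=l$ or $j=l$). Let $\theta=(\theta_1,\dots,\theta_n)\in[0,1]^n$, $\Theta=\mathrm{diag}(\theta)$, $W(x)=\mathrm{diag}(x)+(I_n-\mathrm{diag}(x))C$. Let $\mathcal V_f=\{i:\theta_i=0\}$ and $\mathcal V_p=\{i:\theta_i>0\}$. System (A): $x(s+1)=F(x(s))$, $s=0,1,2,\dots$, $x(0)\in\Delta_n$, where $F(x)=(I_n-\Theta)(I_n-W(x)^T\Theta)^{-1}\mathbf 1_n/n$. *)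

(* Defs.v *)
(* the real numbers are modelled by an arbitrary
   archimedean real closed field R (has Num.sqrt, matrices, invmx). *)
From HB Require Import structures.
From mathcomp Require Import all_boot all_order all_algebra.
Set Implicit Arguments. Unset Strict Implicit. Unset Printing Implicit Defensive.
Import Order.TTheory GRing.Theory Num.Theory.
Local Open Scope ring_scope.

Section Defs.
Variable R : archiRcfType.
Variable n : nat.

Definition row_stochastic_zero_diag (C : 'M[R]_n) : Prop :=
  (forall i j, 0 <= C i j) /\ (forall i, \sum_j C i j = 1) /\ (forall i, C i i = 0).

Definition star_topology (C : 'M[R]_n) (l : 'I_n) : Prop :=
  forall i j, 0 < C i j -> i = l \/ j = l.

Definition Theta (theta : 'I_n -> R) : 'M[R]_n := diag_mx (\row_i theta i).

Definition Wmx (C : 'M[R]_n) (x : 'cV[R]_n) : 'M[R]_n :=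
  diag_mx x^T + (1%:M - diag_mx x^T) *m C.

Definition Fmap (C : 'M[R]_n) (theta : 'I_n -> R) (x : 'cV[R]_n) : 'cV[R]_n :=
  (1%:M - Theta theta) *m invmx (1%:M - (Wmx C x)^T *m Theta theta)
    *m const_mx (n%:R^-1).

Definition in_simplex (x : 'cV[R]_n) : Prop :=
  (forall i, 0 <= x i 0) /\ \sum_i x i 0 = 1.

Definition traj (C : 'M[R]_n) (theta : 'I_n -> R) (x0 : 'cV[R]_n) (s : nat)
  : 'cV[R]_n := iter s (Fmap C theta) x0.

Definition exp_conv (u : nat -> R) (L : R) : Prop :=
  exists c rho : R, 0 <= c /\ 0 <= rho /\ rho < 1 /\
    forall s, `|u s - L| <= c * rho ^+ s.

Definition exp_conv_vec (u : nat -> 'cV[R]_n) (xs : 'cV[R]_n) : Prop :=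
  exists c rho : R, 0 <= c /\ 0 <= rho /\ rho < 1 /\
    forall s i, `|u s i 0 - xs i 0| <= c * rho ^+ s.

Definition root_val (th a : R) : R :=
  (n%:R - Num.sqrt (n%:R ^+ 2 - 4%:R * n%:R * th * (1 - th) * a))
    / (2%:R * n%:R * th).

End Defs.

(* Main.v *)
Require Import Defs.
From HB Require Import structures.
From mathcomp Require Import all_boot all_order all_algebra ring lra zify.
Import Order.TTheory GRing.Theory Num.Theory.
Set Implicit Arguments. Unset Strict Implicit. Unset Printing Implicit Defensive.
Local Open Scope ring_scope.


Lemma key_nonneg (R : realFieldType) n (a : 'I_n -> 'I_n -> R) (y b : 'I_n -> R) :
  (forall i j, 0 <= a i j) -> (forall j, \sum_i a i j < 1) ->
  (forall i, 0 <= b i) -> (forall i, y i = b i + \sum_j a i j * y j) ->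
  forall i, 0 <= y i.
Proof.
move=> a0 a1 b0 hy.
case: (boolP [exists i, y i < 0]) => [/existsP [i0 hi0]|/existsPn hn i]; last first.
  by rewrite leNgt hn.
exfalso.
pose N := [pred i | y i < 0].
have h1: forall i, N i -> \sum_(j | N j) a i j * y j <= y i.
  move=> i _; rewrite hy.
  have: \sum_(j | N j) a i j * y j <= \sum_j a i j * y j.
    rewrite [X in _ <= X](bigID N) /= lerDl; apply: sumr_ge0 => j.
    rewrite /N /= -leNgt => hj; exact: mulr_ge0.
  move: (b0 i); lra.
have h2 := ler_sum (index_enum _) h1.
rewrite exchange_big /= in h2.
have h3: \sum_(j | N j) y j < \sum_(j | N j) \sum_(i | N i) a i j * y j.
  apply: ltr_sum; first by apply/hasP; exists i0; [rewrite mem_index_enum|].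
  move=> j hj; rewrite -mulr_suml.
  have hs: \sum_(i | N i) a i j <= \sum_i a i j.
    rewrite [X in _ <= X](bigID N) /= lerDl; apply: sumr_ge0 => i _; exact: a0.
  have := a1 j; move: hj; rewrite /N /= => hj; nra.
lra.
Qed.


Section Step.
Variables (R : archiRcfType) (n : nat) (C : 'M[R]_n) (theta : 'I_n -> R).
Hypothesis n0 : (0 < n)%N.
Hypothesis HC : row_stochastic_zero_diag C.
Hypothesis Hth : forall i, 0 <= theta i /\ theta i <= 1.
Hypothesis Hth1 : forall i, theta i < 1.

Definition Mmx (x : 'cV[R]_n) := 1%:M - (Wmx C x)^T *m Theta theta.
Definition yv x : 'cV[R]_n := invmx (Mmx x) *m const_mx (n%:R^-1 : R).

Lemma W_E (x : 'cV[R]_n) i j : Wmx C x i j = (i == j)%:R * x i 0 + (1 - x i 0) * C i j.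
Proof.
rewrite /Wmx mulmxBl mul1mx mul_diag_mx !mxE.
by case: eqP => [->|_]; rewrite /= ?mulr1n ?mulr0n ?mul1r ?mul0r; ring.
Qed.

Lemma Mmul_E (x : 'cV[R]_n) (u : 'cV[R]_n) i : (Mmx x *m u) i 0 = u i 0 - \sum_k (Wmx C x k i * theta k) * u k 0.
Proof.
rewrite /Mmx mulmxBl mul1mx !mxE; congr (_ - _); apply: eq_bigr => k _.
by rewrite /Theta mul_mx_diag !mxE.
Qed.

Lemma Fmap_E (x : 'cV[R]_n) i : Fmap C theta x i 0 = (1 - theta i) * yv x i 0.
Proof.
rewrite /Fmap -mulmxA mulmxBl mul1mx /Theta mul_diag_mx !mxE.
rewrite -/(yv x); ring.
Qed.

Lemma simplex01 (x : 'cV[R]_n) : in_simplex x -> forall i, 0 <= x i 0 <= 1.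
Proof.
move=> [h0 h1] i; rewrite h0 /= -h1 (bigD1 i) //= lerDl.
by apply: sumr_ge0 => j _.
Qed.

Lemma Wrow (x : 'cV[R]_n) k : \sum_i Wmx C x k i = 1.
Proof.
under eq_bigr => i _ do rewrite W_E.
rewrite big_split /= -mulr_sumr (proj1 (proj2 HC)) mulr1.
rewrite (bigD1 k) //= eqxx mul1r big1 ?addr0; first ring.
by move=> i; rewrite eq_sym => /negbTE ->; rewrite mul0r.
Qed.

Lemma Wge0 (x : 'cV[R]_n) k i : (forall i, 0 <= x i 0 <= 1) -> 0 <= Wmx C x k i.
Proof.
move=> hx; rewrite W_E; have := hx k; have := (proj1 HC) k i.
case: (k == i) => /=; rewrite ?mulr1n ?mulr0n => h1 /andP[h2 h3]; nra.
Qed.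

Lemma Mkey (x : 'cV[R]_n) (u : 'cV[R]_n) (b : 'I_n -> R) : (forall i, 0 <= x i 0 <= 1) ->
  (forall i, 0 <= b i) -> (forall i, (Mmx x *m u) i 0 = b i) -> forall i, 0 <= u i 0.
Proof.
move=> hx hb hu.
apply: (@key_nonneg _ _ (fun i k => Wmx C x k i * theta k) (fun i => u i 0) b).
- move=> i j; apply: mulr_ge0; [exact: Wge0 | exact: (proj1 (Hth j))].
- move=> j; rewrite -mulr_suml Wrow mul1r; exact: Hth1.
- exact: hb.
- by move=> i; rewrite -hu Mmul_E; ring.
Qed.

Lemma Munit (x : 'cV[R]_n) : (forall i, 0 <= x i 0 <= 1) -> Mmx x \in unitmx.
Proof.
move=> hx; rewrite -unitmx_tr unitmxE unitfE; apply/negP => /det0P [v vn0 hv].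
have hw : Mmx x *m v^T = 0 by rewrite -[Mmx x]trmxK -trmx_mul hv trmx0.
have h1 : forall i, 0 <= v^T i 0.
  by apply: (@Mkey x _ (fun _ => 0) hx) => // i; rewrite hw mxE.
have h2 : forall i, 0 <= (- v^T) i 0.
  by apply: (@Mkey x _ (fun _ => 0) hx) => // i; rewrite mulmxN hw oppr0 mxE.
move/negP: vn0; apply; apply/eqP/rowP => j; rewrite mxE.
have := h1 j; have := h2 j; rewrite !mxE; lra.
Qed.

Lemma yv_eq (x : 'cV[R]_n) i : (forall i, 0 <= x i 0 <= 1) ->
  yv x i 0 = n%:R^-1 + \sum_k (Wmx C x k i * theta k) * yv x k 0.
Proof.
move=> hx; have hK : Mmx x *m yv x = const_mx (n%:R^-1) by rewrite /yv mulKVmx ?Munit.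
move/(congr1 (fun M : 'cV[R]_n => M i 0)): hK; rewrite Mmul_E [const_mx _ _ _]mxE => <-; ring.
Qed.

Lemma yv_ge0 (x : 'cV[R]_n) i : (forall i, 0 <= x i 0 <= 1) -> 0 <= yv x i 0.
Proof.
move=> hx; apply: (@Mkey x _ (fun _ => n%:R^-1) hx).
  by move=> _; rewrite invr_ge0 ler0n.
by move=> j; rewrite /yv mulKVmx ?Munit // mxE.
Qed.

Lemma Fmap_simplex (x : 'cV[R]_n) : in_simplex x -> in_simplex (Fmap C theta x).
Proof.
move=> hs; have hx := @simplex01 x hs; split.
  move=> i; rewrite Fmap_E; apply: mulr_ge0; last exact: yv_ge0.
  by rewrite subr_ge0; case: (Hth i).
under eq_bigr => i _ do rewrite Fmap_E mulrBl mul1r.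
rewrite sumrB.
have -> : \sum_i yv x i 0 = 1 + \sum_i theta i * yv x i 0.
  under eq_bigr => i _ do rewrite (@yv_eq x i hx).
  rewrite big_split /= sumr_const card_ord -[_ *+ n]mulr_natr mulVf ?pnatr_eq0 -?lt0n //.
  rewrite exchange_big /=; congr (_ + _); apply: eq_bigr => k _.
  by rewrite -mulr_suml -mulr_suml Wrow mul1r mulrC.
ring.
Qed.

End Step.


Section Star.
Variables (R : archiRcfType) (n : nat) (C : 'M[R]_n) (theta : 'I_n -> R) (l : 'I_n).
Hypothesis n0 : (0 < n)%N.
Hypothesis HC : row_stochastic_zero_diag C.
Hypothesis Hth : forall i, 0 <= theta i /\ theta i <= 1.
Hypothesis Hth1 : forall i, theta i < 1.
Hypothesis Hstar : star_topology C l.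
Hypothesis Hl : 0 < theta l.

Lemma Crow k j : k != l -> C k j = (j == l)%:R.
Proof.
move=> kl; have hC := (proj1 HC).
have h0 : forall j, j != l -> C k j = 0.
  move=> j' jl; apply/eqP; rewrite eq_le (hC k j') andbT leNgt; apply/negP.
  by move/Hstar => [/eqP|/eqP]; rewrite ?(negbTE kl) ?(negbTE jl).
case: eqP => [->|/eqP jl]; last by rewrite h0.
have := (proj1 (proj2 HC)) k; rewrite (bigD1 l) //= big1 ?addr0 //.
Qed.

Lemma yv_eq2 (x : 'cV[R]_n) i : (forall i, 0 <= x i 0 <= 1) ->
  yv C theta x i 0 = n%:R^-1 + x i 0 * theta i * yv C theta x i 0 +
    \sum_k (1 - x k 0) * C k i * theta k * yv C theta x k 0.
Proof.
move=> hx; rewrite {1}yv_eq //.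
under eq_bigr => k _ do rewrite W_E !mulrDl.
rewrite big_split /= addrA; congr (_ + _ + _).
  rewrite (bigD1 i) //= eqxx mul1r big1 ?addr0 // => k /negbTE ->.
  by rewrite /= mulr0n !mul0r.
by apply: eq_bigr => k _; ring.
Qed.

Lemma yv_offl (x : 'cV[R]_n) i : (forall i, 0 <= x i 0 <= 1) -> i != l ->
  yv C theta x i 0 = n%:R^-1 + x i 0 * theta i * yv C theta x i 0 +
    (1 - x l 0) * C l i * theta l * yv C theta x l 0.
Proof.
move=> hx il; rewrite {1}yv_eq2 //; congr (_ + _).
rewrite (bigD1 l) //= big1 ?addr0 // => k kl.
by rewrite Crow // (negbTE il) /= mulr0n; ring.
Qed.

Lemma yv_l (x : 'cV[R]_n) : (forall i, 0 <= x i 0 <= 1) ->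
  yv C theta x l 0 = n%:R^-1 + x l 0 * theta l * yv C theta x l 0 +
    \sum_(k | k != l) (1 - x k 0) * theta k * yv C theta x k 0.
Proof.
move=> hx; rewrite {1}yv_eq2 //; congr (_ + _).
rewrite (bigD1 l) //= (proj2 (proj2 HC)) /= mulr0 !mul0r add0r.
by apply: eq_bigr => k kl; rewrite Crow // eqxx /= mulr1n; ring.
Qed.

Lemma step_pp (x : 'cV[R]_n) i : in_simplex x -> i != l -> C l i = 0 ->
  Fmap C theta x i 0 * (1 - theta i * x i 0) = (1 - theta i) / n%:R.
Proof.
move=> hs il hli; have hx := simplex01 hs.
have := yv_offl hx il; rewrite hli Fmap_E => h.
have hn : n%:R^-1 * n%:R = 1 :> R by rewrite mulVf // pnatr_eq0 -lt0n.
move: hn h; set y := yv C theta x i 0; set m := n%:R^-1; move=> hn h.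
nra.
Qed.

Definition ppred := fun j => (0 < theta j) && (j != l).
Definition rr := #|[pred j | theta j == 0]|.
Definition xi (z : 'cV[R]_n) :=
  n%:R - rr%:R - n%:R * \sum_(j | (0 < theta j) && (j != l)) z j 0.

Lemma card_split : (n - rr)%:R = 1 + #|[pred j | (0 < theta j) && (j != l)]|%:R :> R.
Proof.
have h := cardC [pred j | theta j == 0]; rewrite card_ord in h.
have hl : l \in [predC [pred j | theta j == 0]] by rewrite !inE /= lt0r_neq0.
have h2 := cardD1 l [predC [pred j | theta j == 0]]; rewrite hl in h2.
have -> : #|[pred j | (0 < theta j) && (j != l)]| =
          #|[predD1 [predC [pred j | theta j == 0]] & l]|.
  apply: eq_card => j; rewrite !inE /= andbC; congr (_ && _).
  by rewrite lt0r (proj1 (Hth j)) andbT.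
have e : (n - rr = 1 + #|[predD1 [predC [pred j | theta j == 0%R]] & l]|)%N.
  rewrite /rr [X in (X - _)%N](esym h) h2 addKn /=; done.
by rewrite e natrD.
Qed.

Hypothesis Hpp : forall i, 0 < theta i -> i != l -> C l i = 0.

Lemma rr_le : (rr <= n)%N.
Proof. by have := max_card [pred j | theta j == 0]; rewrite card_ord. Qed.

Lemma yl_xi (x : 'cV[R]_n) : in_simplex x ->
  yv C theta x l 0 * (1 - theta l * x l 0) = xi (Fmap C theta x) / n%:R.
Proof.
move=> hs; have hx := simplex01 hs; have h := yv_l hx.
have hS : \sum_(k | k != l) (1 - x k 0) * theta k * yv C theta x k 0 =
   #|[pred j | (0 < theta j) && (j != l)]|%:R * n%:R^-1 -
   \sum_(j | (0 < theta j) && (j != l)) Fmap C theta x j 0.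
  rewrite (bigID (fun k => theta k == 0)) /= big1 ?add0r; last first.
    by move=> k /andP[_ /eqP ->]; rewrite mulr0 mul0r.
  have -> : \sum_(i | (i != l) && (theta i != 0))
        (1 - x i 0) * theta i * yv C theta x i 0 =
      \sum_(j | (0 < theta j) && (j != l)) (n%:R^-1 - Fmap C theta x j 0).
    apply: eq_big => k.
      rewrite andbC; congr (_ && _); by rewrite lt0r (proj1 (Hth k)) andbT.
    move=> /andP[kl tk]; have tk' : 0 < theta k by rewrite lt0r tk (proj1 (Hth k)).
    have := yv_offl hx kl; rewrite (Hpp tk' kl) Fmap_E => e.
    set y := yv C theta x k 0 in e *; nra.
  by rewrite sumrB sumr_const mulr_natl.
have hn : n%:R * n%:R^-1 = 1 :> R by rewrite mulfV // pnatr_eq0 -lt0n.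
have hc := card_split.
rewrite /xi -natrB ?rr_le // hc.
move: h hS hn; rewrite -/rr.
set y := yv C theta x l 0; set m := n%:R^-1; set S1 := \sum_(k | k != l) _.
set S2 := \sum_(j | _) _; set c := #|_|%:R => h hS hn.
have -> : (1 + c - n%:R * S2) * m = m + c * m - S2.
  by rewrite mulrBl mulrDl mul1r (mulrC n%:R) -mulrA hn mulr1.
move: h hS; rewrite mulrBr mulr1; lra.
Qed.

Lemma step_l (x : 'cV[R]_n) : in_simplex x ->
  Fmap C theta x l 0 * (1 - theta l * x l 0) = (1 - theta l) * xi (Fmap C theta x) / n%:R.
Proof.
move=> hs; rewrite -mulrA -(yl_xi hs) {1}Fmap_E; ring.
Qed.

Lemma step_f (x : 'cV[R]_n) i : in_simplex x -> theta i = 0 ->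
  Fmap C theta x i 0 = n%:R^-1 + C l i * (xi (Fmap C theta x) / n%:R - Fmap C theta x l 0).
Proof.
move=> hs ti; have hx := simplex01 hs.
have il : i != l by apply/eqP => e; move: Hl; rewrite -e ti ltxx.
have h1 := yv_offl hx il; have h2 := yl_xi hs.
rewrite !Fmap_E ti.
move: h1 h2; rewrite ti; set yl := yv C theta x l 0; set yi := yv C theta x i 0.
set X := xi _; move=> h1 h2; rewrite h1 -h2; ring.
Qed.

End Star.


Lemma rv_spec (R : archiRcfType) (n : nat) (t a : R) : (0 < n)%N -> 0 < t -> t < 1 ->
  0 <= a -> a <= n%:R ->
  n%:R * root_val n t a * (1 - t * root_val n t a) = (1 - t) * a /\
  0 <= root_val n t a /\ root_val n t a * n%:R <= a /\
  (forall c, 0 < c -> c < 1 -> a <= c * n%:R -> t * root_val n t a < 1 - t * c).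
Proof.
move=> n0 t0 t1 a0 aN.
have N0 : 0 < n%:R :> R by rewrite ltr0n.
set N := n%:R in N0 aN *.
set D := N ^+ 2 - 4%:R * N * t * (1 - t) * a.
have h4 : 4%:R * t * (1 - t) <= 1.
  have := sqr_ge0 (2%:R * t - 1); rewrite expr2; nra.
have D0 : 0 <= D.
  rewrite /D; have h : 4%:R * t * (1 - t) * a <= N.
    by apply: le_trans (ler_wpM2r a0 h4) _; rewrite mul1r.
  have h' : 4%:R * N * t * (1 - t) * a <= N * N.
    have -> : 4%:R * N * t * (1 - t) * a = N * (4%:R * t * (1 - t) * a) by ring.
    by rewrite ler_wpM2l // ltW.
  rewrite expr2; lra.
have hs := sqr_sqrtr D0; have s0 := sqrtr_ge0 D.
have hsq : Num.sqrt D ^+ 2 = D by [].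
set s := Num.sqrt D in hs s0 hsq.
have hsN : s <= N.
  have hp : 0 <= 4%:R * N * t * (1 - t) * a.
    by rewrite !mulr_ge0 ?ler0n ?(ltW N0) ?(ltW t0) // subr_ge0 ltW.
  have : s ^+ 2 <= N ^+ 2 by rewrite hs /D; lra.
  rewrite !expr2; nra.
have hr : root_val n t a * (2%:R * N * t) = N - s.
  rewrite /root_val -/N -/D -/s divfK //.
  by rewrite lt0r_neq0 // !mulr_gt0 ?ltr0n.
set r := root_val n t a in hr *.
have t2 : 0 < 2%:R * N * t by rewrite !mulr_gt0 ?ltr0n.
split.
  have : 4%:R * N * t * (N * r * (1 - t * r) - (1 - t) * a) = 0.
    have e : 4%:R * N * t * (N * r * (1 - t * r) - (1 - t) * a) =
      N * (2 * (r * (2%:R * N * t))) - (r * (2%:R * N * t)) ^+ 2 - 4%:R * N * t * (1 - t) * a.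
      ring.
    rewrite e hr; move: hs; rewrite /D expr2 => hs; rewrite expr2; nra.
  have nz : 4%:R * N * t != 0 by rewrite lt0r_neq0 // !mulr_gt0 ?ltr0n.
  by move/eqP; rewrite mulf_eq0 (negbTE nz) /= subr_eq0 => /eqP.
split.
  have : 0 <= r * (2%:R * N * t) by rewrite hr subr_ge0.
  by rewrite pmulr_lge0.
split.
  (* r N <= a  <=>  N - s <= 2 t a *)
  have hs2 : N - 2%:R * t * a <= s.
    case: (lerP (N - 2%:R * t * a) 0) => h; first exact: le_trans h s0.
    rewrite -(ler_pXn2r (n := 2)) ?nnegrE ?(ltW h) //.
    have hp : 0 <= t * t * a * (N - a) by rewrite !mulr_ge0 ?(ltW t0) // subr_ge0.
    rewrite hs /D !expr2; nra.
  have h : r * (2%:R * N * t) <= 2%:R * t * a by rewrite hr; lra.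
  have : (r * N - a) * (2%:R * t) <= 0 by lra.
  by rewrite pmulr_lle0 ?subr_le0 // mulr_gt0 ?ltr0n.
move=> c c0 c1 acN.
have key : 2%:R * N * t * c - N < s.
  case: (ltrP (2%:R * N * t * c - N) 0) => h; first exact: lt_le_trans h s0.
  rewrite -(ltr_pXn2r (n := 2)) ?nnegrE //.
  rewrite hs /D !expr2.
  have e1 : 4%:R * N * t * (1 - t) * a <= 4%:R * N * t * (1 - t) * (c * N).
    by rewrite ler_wpM2l // !mulr_ge0 ?ler0n ?(ltW N0) ?(ltW t0) // subr_ge0 ltW.
  have e2 : 0 < N * N * t * t * c * (1 - c) by rewrite !mulr_gt0 // subr_gt0.
  nra.
have : t * r * (2%:R * N) < (1 - t * c) * (2%:R * N).
  have -> : t * r * (2%:R * N) = r * (2%:R * N * t) by ring.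
  rewrite hr; nra.
by rewrite ltr_pM2r // mulr_gt0 ?ltr0n.
Qed.


Section Contr.
Variable R : archiRcfType.

Lemma contr_pp (N t T x x' r : R) : 1 <= N -> 0 < t -> t <= T -> T < 1 ->
  0 <= x <= 1 -> x' * (1 - t * x) = (1 - t) / N ->
  N * r * (1 - t * r) = 1 - t -> 0 <= r -> r * N <= 1 ->
  `|x' - r| <= T / (N - T) * `|x - r|.
Proof.
move=> N1 t0 tT T1 /andP[x0 x1] hx hr r0 rN.
have N0 : 0 < N by lra.
have hx' : x' * (1 - t * x) * N = 1 - t by rewrite hx divfK // lt0r_neq0.
have E : (x' - r) * ((1 - t * x) * (N * (1 - t * r))) = (1 - t) * t * (x - r).
  transitivity ((x' * (1 - t * x) * N) * (1 - t * r) - (N * r * (1 - t * r)) * (1 - t * x)).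
    ring.
  rewrite hx' hr; ring.
have ha : 1 - t <= 1 - t * x by nra.
have hb : N - t <= N * (1 - t * r) by nra.
have hab : (1 - t) * (N - t) <= (1 - t * x) * (N * (1 - t * r)).
  apply: le_trans (ler_wpM2l _ hb) _; first lra.
  apply: ler_wpM2r; lra.
have E2 : `|x' - r| * ((1 - t * x) * (N * (1 - t * r))) = (1 - t) * t * `|x - r|.
  rewrite -(ger0_norm (x := (1 - t * x) * (N * (1 - t * r)))); last by nra.
  rewrite -normrM E normrM ger0_norm //; nra.
set e' := `|x' - r| in E2 *; set e := `|x - r| in E2 *.
have e'0 : 0 <= e' by rewrite normr_ge0.
have e0 : 0 <= e by rewrite normr_ge0.
have h1 : e' * ((1 - t) * (N - t)) <= (1 - t) * t * e.
  by rewrite -E2; apply: ler_wpM2l.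
have h2 : e' * (N - t) <= t * e.
  have : (1 - t) * (e' * (N - t) - t * e) <= 0 by lra.
  rewrite pmulr_rle0 ?subr_gt0 //; lra.
rewrite mulrAC ler_pdivlMr; last lra.
nra.
Qed.

Lemma contr_l (N t c x x' r X Xs : R) : 1 <= N -> 0 < t -> t < 1 -> 0 < c -> c < 1 ->
  0 <= x <= c -> x' * (1 - t * x) = (1 - t) * X / N ->
  N * r * (1 - t * r) = (1 - t) * Xs -> 0 <= r -> r * N <= Xs -> Xs <= c * N ->
  t * r < 1 - t * c ->
  `|x' - r| <= `|X - Xs| / N + t * r / (1 - t * c) * `|x - r|.
Proof.
move=> N1 t0 t1 c0 c1 /andP[x0 xc] hx hr r0 rN XsN trc.
have N0 : 0 < N by lra.
have hx' : x' * (1 - t * x) * N = (1 - t) * X by rewrite hx divfK // lt0r_neq0.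
have rc : r <= c.
  have : r * N <= c * N by lra.
  by rewrite ler_pM2r.
have b0 : 0 < 1 - t * r by nra.
have E : (x' - r) * (1 - t * x) * N = (1 - t) * (X - Xs) + N * r * t * (x - r).
  apply: (mulIf (lt0r_neq0 b0)).
  transitivity ((x' * (1 - t * x) * N) * (1 - t * r) - (N * r * (1 - t * r)) * (1 - t * x)).
    ring.
  have -> : ((1 - t) * (X - Xs) + N * r * t * (x - r)) * (1 - t * r) =
    (1 - t) * (X - Xs) * (1 - t * r) + (N * r * (1 - t * r)) * t * (x - r) by ring.
  rewrite hx' hr; ring.
have ha : 1 - t * c <= 1 - t * x by nra.
have a0 : 0 < 1 - t * c by nra.
have E2 : `|x' - r| * ((1 - t * x) * N) <= (1 - t) * `|X - Xs| + N * r * t * `|x - r|.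
  rewrite -(ger0_norm (x := (1 - t * x) * N)); last by nra.
  rewrite -normrM mulrA E.
  apply: le_trans (ler_normD _ _) _.
  have h1 : 0 <= 1 - t by lra.
  have h2 : 0 <= N * r * t by rewrite !mulr_ge0 //; lra.
  by rewrite [`|(1 - t) * _|]normrM [`|N * r * t * _|]normrM (ger0_norm h1) (ger0_norm h2).
set e' := `|x' - r| in E2 *; set e := `|x - r| in E2 *; set d := `|X - Xs| in E2 *.
have e'0 : 0 <= e' by rewrite normr_ge0.
have e0 : 0 <= e by rewrite normr_ge0.
have d0 : 0 <= d by rewrite normr_ge0.
set rho := t * r / (1 - t * c).
have hrho : rho * (1 - t * c) = t * r by rewrite /rho divfK // lt0r_neq0.
have rho0 : 0 <= rho by rewrite /rho divr_ge0 //; nra.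
have hdN : d / N * N = d by rewrite divfK // lt0r_neq0.
set dN := d / N in hdN *.
have ax0 : 0 < (1 - t * x) * N by nra.
rewrite -(ler_pM2r ax0).
have h3 : rho * (1 - t * x) >= t * r by nra.
have h4 : N * r * t * e <= rho * (1 - t * x) * (N * e).
  have -> : N * r * t * e = t * r * (N * e) by ring.
  by apply: ler_wpM2r => //; rewrite mulr_ge0 //; lra.
have h5 : (1 - t) * d <= (1 - t * x) * d by apply: ler_wpM2r => //; nra.
have -> : (dN + rho * e) * ((1 - t * x) * N) = (1 - t * x) * (dN * N) + rho * (1 - t * x) * (N * e) by ring.
rewrite hdN; lra.
Qed.

End Contr.


Lemma geo_rec (R : archiRcfType) (f : nat -> R) (rho tau K : R) :
  0 <= rho -> rho < tau -> 0 <= K ->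
  (forall s, f s.+1 <= rho * f s + K * tau ^+ s.+1) ->
  forall s, f s <= Num.max (f 0%N) (K * tau / (tau - rho)) * tau ^+ s.
Proof.
move=> r0 rt K0 hf; set Cm := Num.max _ _.
have t0 : 0 < tau by lra.
have hC1 : f 0%N <= Cm by rewrite le_max lexx.
have hC2 : K * tau <= Cm * (tau - rho).
  rewrite -ler_pdivrMr ?subr_gt0 //; by rewrite le_max lexx orbT.
elim=> [|s IH]; first by rewrite expr0 mulr1.
apply: le_trans (hf s) _.
have ts : 0 <= tau ^+ s by rewrite exprn_ge0 // ltW.
have : rho * f s <= rho * (Cm * tau ^+ s) by apply: ler_wpM2l.
rewrite exprS => h.
have : K * tau * tau ^+ s <= Cm * (tau - rho) * tau ^+ s by apply: ler_wpM2r.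
nra.
Qed.

Section Main.
Variables (R : archiRcfType) (n : nat) (C : 'M[R]_n) (theta : 'I_n -> R) (l : 'I_n).
Hypothesis n2 : (2 <= n)%N.
Hypothesis HC : row_stochastic_zero_diag C.
Hypothesis Hth : forall i, 0 <= theta i /\ theta i <= 1.
Hypothesis Hth1 : forall i, theta i < 1.
Hypothesis Hstar : star_topology C l.
Hypothesis Hl : 0 < theta l.

Let n0 : (0 < n)%N. Proof. by apply: leq_trans n2. Qed.
Let N1 : 1 <= n%:R :> R. Proof. by rewrite ler1n; apply: leq_trans n2. Qed.
Let N2 : 2%:R <= n%:R :> R. Proof. by rewrite ler_nat. Qed.

Lemma traj_S x0 s : traj C theta x0 s.+1 = Fmap C theta (traj C theta x0 s).
Proof. by rewrite /traj iterS. Qed.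

Lemma traj_simplex x0 s : in_simplex x0 -> in_simplex (traj C theta x0 s).
Proof.
move=> h; elim: s => [|s IH] //; rewrite traj_S; exact: Fmap_simplex.
Qed.

Lemma pp_bound i x0 (T : R) : 0 < theta i -> theta i <= T -> T < 1 -> i != l -> C l i = 0 ->
  in_simplex x0 -> forall s,
  `|traj C theta x0 s i 0 - root_val n (theta i) 1| <= (T / (n%:R - T)) ^+ s.
Proof.
move=> t0 tT T1 il hli hs; have N1' := N1.
have [hr [r0 [rN _]]] := rv_spec n0 t0 (Hth1 i) ler01 N1.
rewrite mulr1 in hr.
set r := root_val n (theta i) 1 in hr r0 rN *.
have rho0 : 0 <= T / (n%:R - T) by rewrite divr_ge0 //; lra.
elim=> [|s IH].
  rewrite expr0; have := simplex01 hs i; move=> /andP [a b].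
  have : r <= 1 by nra.
  move=> h; rewrite /traj /= ler_norml; apply/andP; split; lra.
rewrite exprS traj_S.
have hs' := traj_simplex s hs.
have := contr_pp N1 t0 tT T1 (simplex01 hs' i) (step_pp n0 HC Hth Hth1 Hstar hs' il hli) hr r0 rN.
move=> h; apply: le_trans h _; exact: ler_wpM2l.
Qed.

Lemma part1 : forall i, 0 < theta i -> i != l -> C l i = 0 ->
     forall x0, in_simplex x0 ->
       exp_conv (fun s => traj C theta x0 s i 0) (root_val n (theta i) 1).
Proof.
move=> i t0 il hli x0 hs; have N2' := N2.
exists 1, (theta i / (n%:R - theta i)); split; first exact: ler01.
have t1 := Hth1 i.
split; first by rewrite divr_ge0 //; lra.
split; first by rewrite ltr_pdivrMr; lra.
move=> s; rewrite mul1r; exact: pp_bound.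
Qed.

End Main.


Section Part2.
Variables (R : archiRcfType) (n : nat) (C : 'M[R]_n) (theta : 'I_n -> R) (l : 'I_n).
Hypothesis n2 : (2 <= n)%N.
Hypothesis HC : row_stochastic_zero_diag C.
Hypothesis Hth : forall i, 0 <= theta i /\ theta i <= 1.
Hypothesis Hth1 : forall i, theta i < 1.
Hypothesis Hstar : star_topology C l.
Hypothesis Hl : 0 < theta l.
Hypothesis Hpp : forall i, 0 < theta i -> i != l -> C l i = 0.
Hypothesis Hsum : \sum_(j | (0 < theta j) && (j != l)) theta j <= 4%:R * n%:R / 5%:R - 1.

Let n0 : (0 < n)%N. Proof. by apply: leq_trans n2. Qed.
Let N1 : 1 <= n%:R :> R. Proof. by rewrite ler1n; apply: leq_trans n2. Qed.

Let N2 : 2%:R <= n%:R :> R. Proof. by rewrite ler_nat. Qed.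

Definition cc : R := 4%:R / 5%:R.
Lemma cc_pos : 0 < cc. Proof. by rewrite /cc divr_gt0 ?ltr0n. Qed.
Lemma cc_lt1 : cc < 1. Proof. by rewrite /cc ltr_pdivrMr ?ltr0n // mul1r ltr_nat. Qed.

Definition rs j := root_val n (theta j) 1.
Definition Xs := n%:R - (rr theta)%:R - n%:R * \sum_(j | (0 < theta j) && (j != l)) rs j.
Definition rl := root_val n (theta l) Xs.

Lemma rs_spec j : 0 < theta j ->
  n%:R * rs j * (1 - theta j * rs j) = 1 - theta j /\ 0 <= rs j /\ rs j * n%:R <= 1 /\
  1 - theta j <= n%:R * rs j.
Proof.
move=> t0; have [h [h0 [h1 _]]] := rv_spec n0 t0 (Hth1 j) ler01 N1.
rewrite mulr1 in h; rewrite /rs; split => //; split => //; split => //.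
rewrite -h; have N1' := N1; have hrN : root_val n (theta j) 1 <= 1 by nra.
have : 0 <= theta j * root_val n (theta j) 1 by apply: mulr_ge0; lra.
have : 0 <= n%:R * root_val n (theta j) 1 :> R by apply: mulr_ge0; lra.
nra.
Qed.

Lemma sum_pp_const (a : R) :
  \sum_(j | (0 < theta j) && (j != l)) a = #|[pred j | (0 < theta j) && (j != l)]|%:R * a.
Proof. by rewrite sumr_const mulr_natl. Qed.

Lemma Xs_eq : Xs = 1 + #|[pred j | (0 < theta j) && (j != l)]|%:R -
                   n%:R * \sum_(j | (0 < theta j) && (j != l)) rs j.
Proof. by rewrite /Xs -natrB ?rr_le // (card_split Hth Hl). Qed.

Lemma Xs_bounds : 1 <= Xs /\ Xs <= cc * n%:R.
Proof.
rewrite Xs_eq mulr_sumr; split.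
  have : \sum_(j | (0 < theta j) && (j != l)) n%:R * rs j <=
         \sum_(j | (0 < theta j) && (j != l)) 1.
    apply: ler_sum => j /andP[t0 _]; have [_ [_ [h _]]] := rs_spec t0; lra.
  rewrite sum_pp_const mulr1; lra.
have : \sum_(j | (0 < theta j) && (j != l)) (1 - theta j) <=
       \sum_(j | (0 < theta j) && (j != l)) n%:R * rs j.
  apply: ler_sum => j /andP[t0 _]; have [_ [_ [_ h]]] := rs_spec t0; lra.
rewrite sumrB sum_pp_const mulr1.
have -> : cc * n%:R = 4%:R * n%:R / 5%:R by rewrite /cc; ring.
move=> h; have hs := Hsum; lra.
Qed.

Lemma rl_spec : n%:R * rl * (1 - theta l * rl) = (1 - theta l) * Xs /\ 0 <= rl /\
  rl * n%:R <= Xs /\ theta l * rl < 1 - theta l * cc.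
Proof.
have [X1 X2] := Xs_bounds; have c1 := cc_lt1; have c0 := cc_pos.
have XN : Xs <= n%:R by have N1' := N1; nra.
have [h [h0 [h1 h2]]] := rv_spec n0 Hl (Hth1 l) (le_trans ler01 X1) XN.
rewrite /rl; do 3 (split => //); exact: h2.
Qed.

Definition xs : 'cV[R]_n := \col_i (if theta i == 0 then n%:R^-1 + (Xs / n%:R - rl) * C l i
   else if i == l then rl else rs i).

Lemma xs_pp j : (0 < theta j) && (j != l) -> xs j 0 = rs j.
Proof. by move=> /andP[t0 jl]; rewrite /xs mxE gt_eqF // (negbTE jl). Qed.
Lemma xs_l : xs l 0 = rl.
Proof. by rewrite /xs mxE gt_eqF // eqxx. Qed.
Lemma xs_f i : theta i = 0 -> xs i 0 = n%:R^-1 + (Xs / n%:R - rl) * C l i.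
Proof. by move=> ti; rewrite /xs mxE ti eqxx. Qed.

Lemma xi_xs : xi theta l xs = Xs.
Proof.
rewrite /xi /Xs; congr (_ - _ * _); apply: eq_bigr => j; exact: xs_pp.
Qed.

Lemma xi_diff (x : 'cV[R]_n) :
  `|xi theta l x - Xs| <= n%:R * \sum_(j | (0 < theta j) && (j != l)) `|x j 0 - rs j|.
Proof.
have -> : xi theta l x - Xs = - (n%:R * \sum_(j | (0 < theta j) && (j != l)) (x j 0 - rs j)).
  rewrite /xi /Xs sumrB; ring.
rewrite normrN normrM ger0_norm ?ler0n //; apply: ler_wpM2l; first exact: ler0n.
exact: ler_norm_sum.
Qed.

Lemma tri i : [\/ (0 < theta i) && (i != l), i = l | theta i = 0].
Proof.
case: (eqVneq i l) => [->|il]; first by constructor 2.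
case: (Hth i) => h0 _; rewrite le_eqVlt in h0; case/orP: h0 => [/eqP <-|t0].
  by constructor 3.
by constructor 1; apply/andP.
Qed.

Lemma xi_eq (x : 'cV[R]_n) : xi theta l x = 1 + #|[pred j | (0 < theta j) && (j != l)]|%:R -
                   n%:R * \sum_(j | (0 < theta j) && (j != l)) x j 0.
Proof. by rewrite /xi -natrB ?rr_le // (card_split Hth Hl). Qed.

Lemma next_pp_lb (x : 'cV[R]_n) j : in_simplex x -> 0 < theta j -> j != l ->
  1 - theta j <= n%:R * Fmap C theta x j 0.
Proof.
move=> hs t0 jl; have h := step_pp n0 HC Hth Hth1 Hstar hs jl (Hpp t0 jl).
have x' := (proj1 (Fmap_simplex n0 HC Hth Hth1 hs)) j.
have /andP[x0 x1] := simplex01 hs j.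
have hn : n%:R * ((1 - theta j) / n%:R) = 1 - theta j by rewrite mulrC divfK // pnatr_eq0 -lt0n.
rewrite -{1}hn -h; apply: ler_wpM2l; first exact: ler0n.
have : 0 <= theta j * x j 0 by apply: mulr_ge0; lra.
nra.
Qed.

Lemma next_xi_le (x : 'cV[R]_n) : in_simplex x -> xi theta l (Fmap C theta x) <= cc * n%:R.
Proof.
move=> hs; rewrite xi_eq mulr_sumr.
have : \sum_(j | (0 < theta j) && (j != l)) (1 - theta j) <=
       \sum_(j | (0 < theta j) && (j != l)) n%:R * Fmap C theta x j 0.
  by apply: ler_sum => j /andP[t0 jl]; exact: next_pp_lb.
rewrite sumrB sum_pp_const mulr1.
have -> : cc * n%:R = 4%:R * n%:R / 5%:R by rewrite /cc; ring.
move=> h; have hs' := Hsum; lra.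
Qed.

Lemma next_l_le (x : 'cV[R]_n) : in_simplex x -> Fmap C theta x l 0 <= cc.
Proof.
move=> hs; have h := step_l n0 HC Hth Hth1 Hstar Hl Hpp hs.
have hx := next_xi_le hs.
have x' := (proj1 (Fmap_simplex n0 HC Hth Hth1 hs)) l.
have /andP[x0 x1] := simplex01 hs l.
have t1 := Hth1 l.
set X := xi theta l _ in h hx; set y := Fmap C theta x l 0 in h x' *.
have hX : X / n%:R <= cc by rewrite ler_pdivrMr ?ltr0n.
have hn : (1 - theta l) * X / n%:R = (1 - theta l) * (X / n%:R) by rewrite mulrA.
rewrite hn in h.
have : y * (1 - theta l) <= y * (1 - theta l * x l 0).
  apply: ler_wpM2l; first exact: x'.
  have := Hl; nra.
rewrite h => h2.
have : (1 - theta l) * (y - X / n%:R) <= 0 by lra.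
rewrite pmulr_rle0 ?subr_gt0 //; lra.
Qed.

Lemma pp_contr (x : 'cV[R]_n) j (T : R) : in_simplex x -> 0 < theta j -> j != l ->
  theta j <= T -> T < 1 ->
  `|Fmap C theta x j 0 - rs j| <= T / (n%:R - T) * `|x j 0 - rs j|.
Proof.
move=> hs t0 jl tT T1.
have [hr [r0 [rN _]]] := rs_spec t0.
exact: (contr_pp N1 t0 tT T1 (simplex01 hs j)
  (step_pp n0 HC Hth Hth1 Hstar hs jl (Hpp t0 jl)) hr r0 rN).
Qed.

Definition rhol := theta l * rl / (1 - theta l * cc).

Lemma rhol_lt1 : 0 <= rhol /\ rhol < 1.
Proof.
have [_ [r0 [_ h]]] := rl_spec; have c1 := cc_lt1; have c0 := cc_pos; have t1 := Hth1 l.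
have a0 : 0 < 1 - theta l * cc by nra.
have Hl' := Hl; rewrite /rhol; split; first by apply: divr_ge0; [apply: mulr_ge0; [lra | exact: r0] | lra].
by rewrite ltr_pdivrMr // mul1r.
Qed.

Lemma l_contr (x : 'cV[R]_n) : in_simplex x -> x l 0 <= cc ->
  `|Fmap C theta x l 0 - rl| <=
    `|xi theta l (Fmap C theta x) - Xs| / n%:R + rhol * `|x l 0 - rl|.
Proof.
move=> hs xc; have [hr [r0 [rN h]]] := rl_spec.
have [X1 X2] := Xs_bounds.
have /andP[x0 _] := simplex01 hs l.
exact: (contr_l N1 Hl (Hth1 l) cc_pos cc_lt1 (introT andP (conj x0 xc))
  (step_l n0 HC Hth Hth1 Hstar Hl Hpp hs) hr r0 rN X2 h).
Qed.

Lemma f_diff (x : 'cV[R]_n) i : in_simplex x -> theta i = 0 ->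
  Fmap C theta x i 0 - xs i 0 =
  C l i * ((xi theta l (Fmap C theta x) - Xs) / n%:R - (Fmap C theta x l 0 - rl)).
Proof.
move=> hs ti; rewrite (step_f n0 HC Hth Hth1 Hstar Hl Hpp hs ti) xs_f //; ring.
Qed.

Lemma exists_T : exists T : R, [/\ 0 <= T, T < 1 & forall i, theta i <= T].
Proof.
have : forall s : seq 'I_n, exists T : R, [/\ 0 <= T, T < 1 & forall i, i \in s -> theta i <= T].
  elim=> [|a s [T [h0 h1 h2]]]; first by exists 0; split => //; exact: ltr01.
  case: (lerP (theta a) T) => ha.
    exists T; split => // i; rewrite inE => /orP[/eqP ->|]; [exact: ha | exact: h2].
  exists (theta a); split => //; first by lra.
  move=> i; rewrite inE => /orP[/eqP ->|/h2]; [exact: lexx | lra].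
move=> /(_ (enum 'I_n)) [T [h0 h1 h2]]; exists T; split => // i.
by apply: h2; rewrite mem_enum.
Qed.

Lemma zero_of_contr (a rho : R) : 0 <= a -> rho < 1 -> a <= rho * a -> a = 0.
Proof. move=> a0 r1 h; apply/eqP; rewrite eq_le a0 andbT; nra. Qed.

Lemma rl_le_cc : rl <= cc.
Proof.
have [_ [r0 [rN _]]] := rl_spec; have [_ X2] := Xs_bounds.
have : rl * n%:R <= cc * n%:R by lra.
by rewrite ler_pM2r ?ltr0n.
Qed.

Lemma rl_le_Xs : 0 <= Xs / n%:R - rl.
Proof.
have [_ [r0 [rN _]]] := rl_spec.
by rewrite subr_ge0 ler_pdivlMr ?ltr0n.
Qed.

Lemma xs_simplex : in_simplex xs.
Proof.
have hC := proj1 HC.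
split.
  move=> i; case: (tri i) => [hp|->|/xs_f ->].
  - rewrite xs_pp //; case/andP: hp => t0 _; by case: (rs_spec t0) => _ [h _].
  - by rewrite xs_l; case: rl_spec => _ [h _].
  - apply: addr_ge0; first by rewrite invr_ge0 ler0n.
    apply: mulr_ge0; [exact: rl_le_Xs | exact: hC].
rewrite (bigID (fun i => theta i == 0)) /=.
rewrite [X in _ + X](bigD1 l) /=; last by rewrite (gt_eqF Hl).
have e1 : \sum_(i | (theta i != 0) && (i != l)) xs i 0 =
          \sum_(j | (0 < theta j) && (j != l)) rs j.
  apply: eq_big => [j|j /andP [tj jl]].
    by rewrite lt0r (proj1 (Hth j)) andbT.
  by rewrite xs_pp // lt0r tj (proj1 (Hth j)).
rewrite e1 xs_l.
have e2 : \sum_(i | theta i == 0) xs i 0 =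
          \sum_(i | theta i == 0) (n%:R^-1 + (Xs / n%:R - rl) * C l i).
  by apply: eq_bigr => i /eqP; exact: xs_f.
rewrite e2 big_split /= sumr_const -mulr_sumr.
have e3 : \sum_(i | theta i == 0) C l i = 1.
  have h := (proj1 (proj2 HC)) l.
  rewrite (bigID (fun i => theta i == 0)) /= in h.
  have h0 : \sum_(i | theta i != 0) C l i = 0.
    rewrite (bigD1 l) /=; last by rewrite (gt_eqF Hl).
    rewrite (proj2 (proj2 HC)) add0r big1 // => j /andP[tj jl].
    by apply: Hpp => //; rewrite lt0r tj (proj1 (Hth j)).
  by rewrite h0 addr0 in h.
rewrite e3 mulr1 -/(rr theta).
have hn : n%:R * n%:R^-1 = 1 :> R by rewrite mulfV // pnatr_eq0 -lt0n.
have : Xs / n%:R = 1 - (rr theta)%:R * n%:R^-1 - \sum_(j | (0 < theta j) && (j != l)) rs j.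
  rewrite /Xs; field; by rewrite pnatr_eq0 -lt0n.
rewrite -mulr_natl; lra.
Qed.

Lemma xi_ext (x y : 'cV[R]_n) :
  (forall j, (0 < theta j) && (j != l) -> x j 0 = y j 0) -> xi theta l x = xi theta l y.
Proof. by move=> h; rewrite /xi; congr (_ - _ * _); apply: eq_bigr. Qed.

Lemma xs_fixed : Fmap C theta xs = xs.
Proof.
have hs := xs_simplex.
have [T [T0 T1 hT]] := exists_T.
have rp1 : T / (n%:R - T) < 1 by have N2' := N2; rewrite ltr_pdivrMr; lra.
have hpp : forall j, (0 < theta j) && (j != l) -> Fmap C theta xs j 0 = xs j 0.
  move=> j hj; have := hj; case/andP => t0 jl.
  have := pp_contr hs t0 jl (hT j) T1; rewrite xs_pp // subrr normr0 mulr0.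
  by rewrite normr_le0 subr_eq0 => /eqP ->.
have hxi : xi theta l (Fmap C theta xs) = Xs by rewrite -xi_xs; exact: xi_ext.
have hl : Fmap C theta xs l 0 = xs l 0.
  have xl : xs l 0 <= cc by rewrite xs_l; exact: rl_le_cc.
  have := l_contr hs xl; rewrite hxi xs_l !subrr normr0 mulr0 mul0r addr0.
  by rewrite normr_le0 subr_eq0 => /eqP ->.
apply/matrixP => i j; rewrite (ord1 j).
case: (tri i) => [/hpp //|->//|ti].
apply/eqP; rewrite -subr_eq0 f_diff // hxi hl xs_l !subrr mul0r subr0 mulr0 //.
Qed.

Lemma xs_unique (y : 'cV[R]_n) : in_simplex y -> Fmap C theta y = y -> y = xs.
Proof.
move=> hs hf.
have [T [T0 T1 hT]] := exists_T.
have rp1 : T / (n%:R - T) < 1 by have N2' := N2; rewrite ltr_pdivrMr; lra.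
have hpp : forall j, (0 < theta j) && (j != l) -> y j 0 = xs j 0.
  move=> j hj; have := hj; case/andP => t0 jl.
  have := pp_contr hs t0 jl (hT j) T1; rewrite hf xs_pp // => h.
  by apply/eqP; rewrite -subr_eq0 -normr_eq0; apply/eqP; exact: (zero_of_contr (normr_ge0 _) rp1 h).
have hxi : xi theta l y = Xs by rewrite -xi_xs; exact: xi_ext.
have yl : y l 0 <= cc by rewrite -hf; exact: next_l_le.
have hl : y l 0 = xs l 0.
  have := l_contr hs yl; rewrite hf hxi subrr normr0 mul0r add0r xs_l => h.
  apply/eqP; rewrite -subr_eq0 -normr_eq0; apply/eqP.
  exact: (zero_of_contr (normr_ge0 _) (proj2 rhol_lt1) h).
apply/matrixP => i j; rewrite (ord1 j).
case: (tri i) => [/hpp //|->//|ti].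
apply/eqP; rewrite -subr_eq0 -{1}hf f_diff // hf hxi hl xs_l !subrr mul0r subr0 mulr0 //.
Qed.

Lemma pow_le (a b : R) s : 0 <= a -> a <= b -> a ^+ s <= b ^+ s.
Proof.
move=> a0 ab; elim: s => [|s IH]; first by rewrite !expr0.
rewrite !exprS; apply: ler_pM => //; exact: exprn_ge0.
Qed.

Lemma C_le1 i : C l i <= 1.
Proof.
rewrite -((proj1 (proj2 HC)) l) (bigD1 i) //= lerDl.
by apply: sumr_ge0 => j _; exact: (proj1 HC).
Qed.

Lemma conv x0 : in_simplex x0 -> exp_conv_vec (traj C theta x0) xs.
Proof.
move=> h0; have N1' := N1; have N2' := N2.
have hs : forall s, in_simplex (traj C theta x0 s).
  by elim=> [|s IH] //; rewrite /traj iterS; exact: Fmap_simplex.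
have tS : forall s, traj C theta x0 s.+1 = Fmap C theta (traj C theta x0 s).
  by move=> s; rewrite /traj iterS.
have [T [T0 T1 hT]] := exists_T.
set rp := T / (n%:R - T).
have rp0 : 0 <= rp by rewrite /rp divr_ge0 //; lra.
have rp1 : rp < 1 by rewrite /rp ltr_pdivrMr; lra.
have Hp : forall j, (0 < theta j) && (j != l) -> forall s,
    `|traj C theta x0 s j 0 - rs j| <= rp ^+ s.
  move=> j /andP[t0 jl]; elim=> [|s IH].
    rewrite expr0; have [_ [r0 [rN _]]] := rs_spec t0.
    have /andP[a b] := simplex01 (hs 0%N) j.
    have : rs j <= 1 by nra.
    by move=> h; rewrite ler_norml; apply/andP; split; lra.
  rewrite tS exprS; apply: le_trans (pp_contr (hs s) t0 jl (hT j) T1) _.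
  exact: ler_wpM2l.
have hcard : #|[pred j | (0 < theta j) && (j != l)]|%:R <= n%:R :> R.
  by rewrite ler_nat; have := max_card [pred j | (0 < theta j) && (j != l)]; rewrite card_ord.
have Hxi : forall s, `|xi theta l (traj C theta x0 s) - Xs| <= n%:R * (n%:R * rp ^+ s).
  move=> s; apply: le_trans (xi_diff _) _; apply: ler_wpM2l; first exact: ler0n.
  apply: le_trans (ler_sum _ (fun j hj => Hp j hj s)) _.
  rewrite sum_pp_const; apply: ler_wpM2r => //; exact: exprn_ge0.
have [rl0 rl1] := rhol_lt1.
set m := Num.max rhol rp.
have hm1 : rhol <= m by rewrite /m le_max lexx.
have hm2 : rp <= m by rewrite /m le_max lexx orbT.
have hm3 : m < 1 by rewrite /m gt_max rl1 rp1.
set tau := (1 + m) / 2%:R.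
have ta0 : 0 < tau by rewrite /tau divr_gt0 ?ltr0n //; lra.
have ta1 : tau < 1 by rewrite /tau ltr_pdivrMr ?ltr0n //; lra.
have ta2 : m < tau by rewrite /tau ltr_pdivlMr ?ltr0n //; lra.
have pw : forall s, rp ^+ s <= tau ^+ s by move=> s; apply: pow_le => //; lra.
have pw1 : forall s, rp ^+ s.+1 <= tau ^+ s.
  move=> s; apply: le_trans (pw s); rewrite exprS; apply: ler_piMl; last lra.
  exact: exprn_ge0.
pose f s := `|traj C theta x0 s.+1 l 0 - rl|.
have Hf : forall s, f s.+1 <= rhol * f s + n%:R * tau ^+ s.+1.
  move=> s; rewrite /f [traj _ _ _ s.+2]tS.
  have xl : traj C theta x0 s.+1 l 0 <= cc by rewrite tS; exact: next_l_le.
  apply: le_trans (l_contr (hs s.+1) xl) _.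
  rewrite addrC lerD2l -tS.
  rewrite ler_pdivrMr ?ltr0n //; apply: le_trans (Hxi _) _.
  have -> : n%:R * tau ^+ s.+1 * n%:R = n%:R * (n%:R * tau ^+ s.+1) by ring.
  apply: ler_wpM2l; first exact: ler0n.
  apply: ler_wpM2l; first exact: ler0n.
  exact: pw1.
have Hg := geo_rec rl0 (le_lt_trans hm1 ta2) (ler0n _ n) Hf.
set Cf := Num.max _ _ in Hg.
set Ce := Num.max 1 (Cf / tau).
have Ce1 : 1 <= Ce by rewrite /Ce le_max lexx.
have [_ [r0l _]] := rl_spec; have rlc := rl_le_cc; have c1 := cc_lt1.
have He : forall s, `|traj C theta x0 s l 0 - rl| <= Ce * tau ^+ s.
  case=> [|s].
    rewrite expr0 mulr1; apply: le_trans _ Ce1.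
    have /andP[a b] := simplex01 (hs 0%N) l.
    by rewrite ler_norml; apply/andP; split; lra.
  apply: le_trans (Hg s) _.
  have hC : Cf <= Ce * tau by rewrite -ler_pdivrMr // /Ce le_max lexx orbT.
  rewrite exprS mulrA; apply: ler_wpM2r hC; apply: exprn_ge0; lra.
exists (n%:R + Ce), tau; split; first lra.
split; first lra.
split; first lra.
move=> s i; have ts0 : 0 <= tau ^+ s by apply: exprn_ge0; lra.
case: (tri i) => [hp|->|ti].
- rewrite xs_pp //; apply: le_trans (Hp i hp s) _; apply: le_trans (pw s) _.
  rewrite -{1}(mul1r (tau ^+ s)); apply: ler_wpM2r => //; lra.
- rewrite xs_l; apply: le_trans (He s) _; apply: ler_wpM2r => //; lra.
- case: s ts0 => [|s] ts0.
    rewrite expr0 mulr1.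
    have /andP[a b] := simplex01 (hs 0%N) i.
    have /andP[c d] := simplex01 xs_simplex i.
    have : `|traj C theta x0 0 i 0 - xs i 0| <= 1.
      by rewrite ler_norml; apply/andP; split; lra.
    lra.
  rewrite tS f_diff // -tS normrM (ger0_norm ((proj1 HC) l i)).
  have hCl := C_le1 i.
  set a := (xi theta l _ - Xs) / n%:R; set b := _ - rl.
  have ha : `|a| <= n%:R * tau ^+ s.+1.
    rewrite /a normrM normfV (ger0_norm (ler0n _ n)) ler_pdivrMr ?ltr0n //.
    apply: le_trans (Hxi _) _.
    have -> : n%:R * tau ^+ s.+1 * n%:R = n%:R * (n%:R * tau ^+ s.+1) by ring.
    apply: ler_wpM2l; first exact: ler0n.
    apply: ler_wpM2l; first exact: ler0n.
    exact: pw.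
  have hb : `|b| <= Ce * tau ^+ s.+1 by exact: He.
  have hab := ler_normB a b.
  have n0' : 0 <= `|a - b| by exact: normr_ge0.
  have : C l i * `|a - b| <= `|a - b| by rewrite ler_piMl // (proj1 HC).
  rewrite mulrDl; lra.
Qed.

Lemma part2_all : exists xs : 'cV[R]_n,
     let r := #|[pred j | theta j == 0]| in
     let xi := n%:R - r%:R - n%:R * \sum_(j | (0 < theta j) && (j != l)) xs j 0 in
     (forall i, 0 < theta i -> i != l -> xs i 0 = root_val n (theta i) 1) /\
     xs l 0 = root_val n (theta l) xi /\
     (forall i, theta i = 0 -> xs i 0 = n%:R^-1 + (xi / n%:R - xs l 0) * C l i) /\
     in_simplex xs /\
     Fmap C theta xs = xs /\
     (forall y, in_simplex y -> Fmap C theta y = y -> y = xs) /\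
     (forall x0, in_simplex x0 -> exp_conv_vec (traj C theta x0) xs).
Proof.
exists xs => r xi0.
have hxi : xi0 = Xs by exact: xi_xs.
split; first by move=> i t0 il; rewrite xs_pp //; apply/andP.
split; first by rewrite hxi xs_l.
split; first by move=> i ti; rewrite xs_f // hxi xs_l.
split; first exact: xs_simplex.
split; first exact: xs_fixed.
split; first exact: xs_unique.
exact: conv.
Qed.

End Part2.


Theorem theorem5 (R : archiRcfType) (n : nat) (C : 'M[R]_n)
  (theta : 'I_n -> R) (l : 'I_n) :
  (2 <= n)%N ->
  row_stochastic_zero_diag C ->
  (forall i, 0 <= theta i /\ theta i <= 1) ->
  (forall i, theta i < 1) ->
  (exists j, 0 < theta j) ->
  star_topology C l ->
  0 < theta l -> theta l < 1 ->
  (* (i) *)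
  (forall i, 0 < theta i -> i != l -> C l i = 0 ->
     forall x0, in_simplex x0 ->
       exp_conv (fun s => traj C theta x0 s i 0) (root_val n (theta i) 1))
  /\
  (* (ii) *)
  ((forall i, 0 < theta i -> i != l -> C l i = 0) ->
   \sum_(j | (0 < theta j) && (j != l)) theta j <= 4%:R * n%:R / 5%:R - 1 ->
   exists xs : 'cV[R]_n,
     let r := #|[pred j | theta j == 0]| in
     let xi := n%:R - r%:R - n%:R * \sum_(j | (0 < theta j) && (j != l)) xs j 0 in
     (forall i, 0 < theta i -> i != l -> xs i 0 = root_val n (theta i) 1) /\
     xs l 0 = root_val n (theta l) xi /\
     (forall i, theta i = 0 -> xs i 0 = n%:R^-1 + (xi / n%:R - xs l 0) * C l i) /\
     in_simplex xs /\
     Fmap C theta xs = xs /\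
     (forall y, in_simplex y -> Fmap C theta y = y -> y = xs) /\
     (forall x0, in_simplex x0 -> exp_conv_vec (traj C theta x0) xs)).
Proof.
move=> n2 HC Hth Hth1 _ Hstar Hl _; split.
  by move=> i t0 il hli x0 hx0; exact: (part1 n2 HC Hth Hth1 Hstar t0 il hli hx0).
by move=> Hpp Hsum; exact: (part2_all n2 HC Hth Hth1 Hstar Hl Hpp Hsum).
Qed.
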